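(* Let $u,v\in\mathbb{Z}[i]$ with $\gcd(u,v)\in U$ and $uv\equiv0\pmod{1+i}$. Then there exist $x,y\in\mathbb{Z}[i]$ with $\gcd(x,y)\in U$ satisfying $x-y=u+v$ and $xy=iuv$ if and only if the quadratic equation $z^2-(u+v)z-iuv=0$ has a solution $z\in\mathbb{Z}[i]$.
   Context: $\mathbb{Z}[i]$ is the ring of Gaussian integers, $U=\{1,-1,i,-i\}$ its unit group. $\gcd(x,y)\in U$ means $x,y$ have no common non-unit divisor. *)

(* Defs.v *)
From Stdlib Require Import ZArith.
Open Scope Z_scope.

Record GI := mkGI { re : Z; im : Z }.

Definition gzero : GI := mkGI 0 0.
Definition gone : GI := mkGI 1 0.
Definition gI : GI := mkGI 0 1.
Definition gadd (x y : GI) : GI := mkGI (re x + re y) (im x + im y).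
Definition gopp (x : GI) : GI := mkGI (- re x) (- im x).
Definition gsub (x y : GI) : GI := gadd x (gopp y).
Definition gmul (x y : GI) : GI :=
  mkGI (re x * re y - im x * im y) (re x * im y + im x * re y).

Definition in_U (e : GI) : Prop :=
  e = mkGI 1 0 \/ e = mkGI (-1) 0 \/ e = mkGI 0 1 \/ e = mkGI 0 (-1).

Definition gdvd (d x : GI) : Prop := exists q : GI, x = gmul d q.

Definition gcd_in_U (x y : GI) : Prop :=
  forall d : GI, gdvd d x -> gdvd d y -> in_U d.

(* Main.v *)
Require Import Defs.
From Stdlib Require Import ZArith Lia Psatz.
Open Scope Z_scope.

Lemma gi_ext (x y : GI) : re x = re y -> im x = im y -> x = y.
Proof. destruct x, y; cbn; intros; subst; reflexivity. Qed.

Ltac gsimp := unfold gsub, gmul, gadd, gopp, gone, gzero, gI in *; cbn [re im] in *.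
Ltac gring := apply gi_ext; gsimp; ring.

Lemma dvd_add d x y : gdvd d x -> gdvd d y -> gdvd d (gadd x y).
Proof. intros [p ->] [q ->]. exists (gadd p q). gring. Qed.
Lemma dvd_sub d x y : gdvd d x -> gdvd d y -> gdvd d (gsub x y).
Proof. intros [p ->] [q ->]. exists (gsub p q). gring. Qed.
Lemma dvd_mull d x y : gdvd d x -> gdvd d (gmul x y).
Proof. intros [p ->]. exists (gmul p y). gring. Qed.
Lemma dvd_mulr d x y : gdvd d y -> gdvd d (gmul x y).
Proof. intros [p ->]. exists (gmul x p). gring. Qed.

Definition N (x : GI) := re x * re x + im x * im x.

Lemma N_nonneg x : 0 <= N x.
Proof. unfold N; nia. Qed.

Lemma div_step (a b : GI) : b <> gzero -> exists q, N (gsub a (gmul b q)) < N b.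
Proof.
  intros Hb. destruct a as [a1 a2], b as [b1 b2].
  set (n := b1*b1 + b2*b2).
  assert (Hn : 0 < n).
  { unfold n. destruct (Z.eq_dec b1 0), (Z.eq_dec b2 0); try nia.
    subst; exfalso; apply Hb; reflexivity. }
  set (c1 := a1*b1 + a2*b2). set (c2 := a2*b1 - a1*b2).
  set (q1 := (2*c1 + n) / (2*n)). set (q2 := (2*c2 + n) / (2*n)).
  assert (H1 := Z.div_mod (2*c1+n) (2*n) ltac:(lia)).
  assert (H1' := Z.mod_pos_bound (2*c1+n) (2*n) ltac:(lia)).
  assert (H2 := Z.div_mod (2*c2+n) (2*n) ltac:(lia)).
  assert (H2' := Z.mod_pos_bound (2*c2+n) (2*n) ltac:(lia)).
  fold q1 in H1. fold q2 in H2.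
  set (e1 := c1 - n*q1). set (e2 := c2 - n*q2).
  assert (E1 : -n <= 2*e1 < n) by (unfold e1; lia).
  assert (E2 : -n <= 2*e2 < n) by (unfold e2; lia).
  assert (F1 : 4*(e1*e1) <= n*n) by nia.
  assert (F2 : 4*(e2*e2) <= n*n) by nia.
  exists (mkGI q1 q2).
  assert (Id : N (gsub (mkGI a1 a2) (gmul (mkGI b1 b2) (mkGI q1 q2))) * n = e1*e1 + e2*e2).
  { unfold N, e1, e2, c1, c2, n; cbn. ring. }
  unfold N at 2; cbn. fold n.
  assert (HN := N_nonneg (gsub (mkGI a1 a2) (gmul (mkGI b1 b2) (mkGI q1 q2)))).
  revert Id HN. generalize (N (gsub (mkGI a1 a2) (gmul (mkGI b1 b2) (mkGI q1 q2)))).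
  intros m Id HN. nia.
Qed.

Lemma bezout_aux (k : nat) : forall u v, (Z.to_nat (N v) < k)%nat ->
  exists a b g, gadd (gmul a u) (gmul b v) = g /\ gdvd g u /\ gdvd g v.
Proof.
  induction k as [|k IH]; intros u v Hk; [lia|].
  destruct (Z.eq_dec (re v) 0) as [Hv1|Hv1];
  [destruct (Z.eq_dec (im v) 0) as [Hv2|Hv2]|].
  - exists gone, gzero, u. split; [|split].
    + apply gi_ext; gsimp; nia.
    + exists gone. gring.
    + exists gzero. apply gi_ext; gsimp; nia.
  - all: idtac.
    destruct (div_step u v) as [q Hq].
    { intro E; subst; cbn in *; lia. }
    set (r := gsub u (gmul v q)) in *.
    assert (HN := N_nonneg r).
    destruct (IH v r ltac:(lia)) as (a & b & g & Hg & Hgv & Hgr).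
    exists b, (gsub a (gmul b q)), g. split; [|split; auto].
    + rewrite <- Hg. unfold r. gring.
    + assert (E : u = gadd (gmul v q) r) by (unfold r; gring). rewrite E.
      apply dvd_add; auto. apply dvd_mull; auto.
  - destruct (div_step u v) as [q Hq].
    { intro E; subst; cbn in *; lia. }
    set (r := gsub u (gmul v q)) in *.
    assert (HN := N_nonneg r).
    destruct (IH v r ltac:(lia)) as (a & b & g & Hg & Hgv & Hgr).
    exists b, (gsub a (gmul b q)), g. split; [|split; auto].
    + rewrite <- Hg. unfold r. gring.
    + assert (E : u = gadd (gmul v q) r) by (unfold r; gring). rewrite E.
      apply dvd_add; auto. apply dvd_mull; auto.
Qed.

Lemma unit_of_dvd1 d : gdvd d gone -> in_U d.
Proof.
  intros [q Hq]. destruct d as [d1 d2], q as [q1 q2].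
  injection Hq as E1 E2.
  assert (Id : (d1*q1 - d2*q2)*(d1*q1 - d2*q2) + (d1*q2+d2*q1)*(d1*q2+d2*q1)
               = (d1*d1+d2*d2)*(q1*q1+q2*q2)) by ring.
  rewrite <- E1, <- E2 in Id.
  assert (Hd : d1*d1 + d2*d2 = 1). { assert (0 <= d1*d1+d2*d2) by nia. apply (Z.eq_mul_1_nonneg _ (q1*q1+q2*q2)); auto; lia. }
  assert (-1 <= d1 <= 1) by nia. assert (-1 <= d2 <= 1) by nia.
  unfold in_U.
  assert (C1 : d1 = -1 \/ d1 = 0 \/ d1 = 1) by lia.
  assert (C2 : d2 = -1 \/ d2 = 0 \/ d2 = 1) by lia.
  destruct C1 as [ -> | [ -> | -> ] ]; destruct C2 as [ -> | [ -> | -> ] ];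
  cbn in Hd; try lia; auto.
Qed.

Lemma unit_inv g : in_U g -> exists g', gmul g g' = gone.
Proof.
  intros [->|[ -> | [ -> | -> ] ]].
  - exists (mkGI 1 0); reflexivity.
  - exists (mkGI (-1) 0); reflexivity.
  - exists (mkGI 0 (-1)); reflexivity.
  - exists (mkGI 0 1); reflexivity.
Qed.

Lemma key u v d : gcd_in_U u v -> gdvd d (gadd u v) -> gdvd d (gmul u v) -> in_U d.
Proof.
  intros Hg Hs Hp.
  destruct (bezout_aux (S (Z.to_nat (N v))) u v ltac:(lia)) as (a & b & g & Hab & Hgu & Hgv).
  destruct (unit_inv g (Hg g Hgu Hgv)) as [g' Hg'].
  set (A := gmul g' a). set (B := gmul g' b).
  assert (HAB : gadd (gmul A u) (gmul B v) = gone).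
  { rewrite <- Hg', <- Hab. unfold A, B. gring. }
  assert (Hu2 : gdvd d (gmul u u)).
  { assert (gmul u u = gsub (gmul u (gadd u v)) (gmul u v)) as -> by gring.
    apply dvd_sub; [apply dvd_mulr|]; auto. }
  assert (Hv2 : gdvd d (gmul v v)).
  { assert (gmul v v = gsub (gmul v (gadd u v)) (gmul u v)) as -> by gring.
    apply dvd_sub; [apply dvd_mulr|]; auto. }
  apply unit_of_dvd1.
  assert (gone = gadd (gadd (gmul (gmul A A) (gmul u u))
            (gmul (gmul (gmul (mkGI 2 0) A) B) (gmul u v))) (gmul (gmul B B) (gmul v v))) as ->.
  { transitivity (gmul (gadd (gmul A u) (gmul B v)) (gadd (gmul A u) (gmul B v))).
    - rewrite HAB; reflexivity.
    - gring. }
  repeat apply dvd_add; apply dvd_mulr; auto.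
Qed.

Theorem proposition4p21 (u v : GI) :
  gcd_in_U u v ->
  gdvd (mkGI 1 1) (gmul u v) ->
  ((exists x y : GI,
      gcd_in_U x y /\ gsub x y = gadd u v /\ gmul x y = gmul gI (gmul u v))
   <->
   (exists z : GI,
      gsub (gsub (gmul z z) (gmul (gadd u v) z)) (gmul gI (gmul u v)) = gzero)).
Proof.
  intros Hg _. split.
  - intros (x & y & _ & H1 & H2). exists x. rewrite <- H1, <- H2. gring.
  - intros [z Hz]. exists z, (gsub z (gadd u v)).
    assert (Hr := f_equal re Hz). assert (Hi := f_equal im Hz). gsimp.
    assert (Hxy : gmul z (gsub z (gadd u v)) = gmul gI (gmul u v)).
    { apply gi_ext; gsimp; nia. }
    split; [|split; [gring|exact Hxy]].
    intros d Hx Hy.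
    apply (key u v d Hg).
    + assert (gadd u v = gsub z (gsub z (gadd u v))) as -> by gring.
      apply dvd_sub; auto.
    + assert (gmul u v = gmul (mkGI 0 (-1)) (gmul z (gsub z (gadd u v)))) as ->.
      { rewrite Hxy. gring. }
      apply dvd_mulr, dvd_mull; auto.
Qed.
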